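(* Let $f:\mathbb N\to\mathbb N$ be defined by $f(n)=\lfloor\varphi n\rfloor+1$ if $n\in R_{0,0}$ and $f(n)=\lfloor(\varphi-1)n\rfloor$ if $n\in R_{1,0}$, and let $\tau:\mathbb N\to\mathbb N$ be defined by $\tau(n)=\lfloor\varphi n+1\rfloor$ if $n\in R_{2,0}$, $\tau(n)=\lfloor\varphi n-1\rfloor$ if $n\in R_{1,0}$, and $\tau(n)=\lfloor(\varphi-1)n+1\rfloor$ if $n\in R_{1,1}$. Both are permutations of $\mathbb N$, and $$f\circ\tau=\tau^{-1}\circ f.$$
   Context: $\mathbb N=\{1,2,\dots\}$, $\varphi=\frac{1+\sqrt5}{2}$, $F$ the Fibonacci numbers ($F(0)=0,F(1)=F(2)=1$). For $i\in\mathbb Z^{\ge0},j\in\mathbb Z$, $R_{i,j}$ is the range of $n\mapsto F(i+1)\lfloor n\varphi\rfloor+F(i)n-j$, $n\in\mathbb N$; $R_{0,0},R_{1,0}$ partition $\mathbb N$, as do $R_{2,0},R_{1,0},R_{1,1}$. *)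

(* Defs.v *)
From Stdlib Require Import Reals Lra Lia ZArith Arith ClassicalEpsilon.
Open Scope R_scope.

Definition phi : R := (1 + sqrt 5) / 2.

(* floor : R -> Z  (Int_part r = up r - 1 is the floor of r) *)
Definition floorR (x : R) : Z := Int_part x.

Fixpoint fib (n : nat) : nat :=
  match n with
  | O => 0%nat
  | S p => match p with O => 1%nat | S q => (fib p + fib q)%nat end
  end.

(* m \in R_{i,j}: m is a value of n |-> F(i+1) floor(n phi) + F(i) n - j, n >= 1 *)
Definition inR (i : nat) (j : Z) (m : nat) : Prop :=
  exists n : nat, (1 <= n)%nat /\
    Z.of_nat m = (Z.of_nat (fib (i + 1)) * floorR (INR n * phi)
                  + Z.of_nat (fib i) * Z.of_nat n - j)%Z.

Definition ifP {A : Type} (P : Prop) (a b : A) : A :=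
  if excluded_middle_informative P then a else b.

Definition f_map (n : nat) : nat :=
  ifP (inR 0 0 n) (Z.to_nat (floorR (phi * INR n)) + 1)%nat
                  (Z.to_nat (floorR ((phi - 1) * INR n))).

Definition tau_map (n : nat) : nat :=
  ifP (inR 2 0 n) (Z.to_nat (floorR (phi * INR n + 1)))
    (ifP (inR 1 0 n) (Z.to_nat (floorR (phi * INR n - 1)))
                     (Z.to_nat (floorR ((phi - 1) * INR n + 1)))).

Definition perm_N (p : nat -> nat) : Prop :=
  (forall n, (1 <= n)%nat -> (1 <= p n)%nat) /\
  (forall m n, (1 <= m)%nat -> (1 <= n)%nat -> p m = p n -> m = n) /\
  (forall m, (1 <= m)%nat -> exists n, (1 <= n)%nat /\ p n = m).

(* Main.v *)
Require Import Defs.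
From Stdlib Require Import Reals ZArith Arith Lra Lia Psatz Classical ClassicalEpsilon.
Open Scope R_scope.

Lemma s5 : sqrt 5 * sqrt 5 = 5.
Proof. apply sqrt_sqrt; lra. Qed.
Lemma s5b : 2 < sqrt 5 < 3.
Proof. pose proof s5. pose proof (sqrt_pos 5). split; nra. Qed.
Lemma phi2 : phi * phi = phi + 1.
Proof. unfold phi. pose proof s5. nra. Qed.
Lemma phib : 3/2 < phi < 2.
Proof. unfold phi. pose proof s5b. lra. Qed.

Lemma sq5_mod (M : Z) : (exists t, M*M = 5*t)%Z -> (exists q, M = 5*q)%Z.
Proof.
  intros [t Ht]. exists (M / 5)%Z.
  pose proof (Z.div_mod M 5 ltac:(lia)). pose proof (Z.mod_pos_bound M 5 ltac:(lia)).
  set (q := (M/5)%Z) in *. set (r := (M mod 5)%Z) in *.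
  assert (r = 0 \/ r = 1 \/ r = 2 \/ r = 3 \/ r = 4)%Z as Hr by lia.
  destruct Hr as [Hr|[Hr|[Hr|[Hr|Hr]]]]; rewrite Hr in *; try lia;
  exfalso; rewrite H in Ht; nia.
Qed.

Lemma no_sq5 : forall k : nat, forall N M : Z, (0 < N)%Z -> Z.to_nat N = k -> (5*N*N <> M*M)%Z.
Proof.
  intro k. induction k as [k IH] using lt_wf_ind.
  intros N M HN Hk HE.
  destruct (sq5_mod M) as [q Hq]. { exists (N*N)%Z. lia. }
  subst M.
  destruct (sq5_mod N) as [p Hp]. { exists (q*q)%Z. nia. }
  subst N.
  apply (IH (Z.to_nat p)) with p q; try lia; nia.
Qed.

Lemma irr (n : nat) (z : Z) : (1 <= n)%nat -> INR n * phi <> IZR z.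
Proof.
  intros Hn E. unfold phi in E.
  assert (E2 : sqrt 5 * INR n = IZR (2*z) - INR n).
  { rewrite mult_IZR. simpl (IZR 2). lra. }
  rewrite INR_IZR_INZ in E2. rewrite <- minus_IZR in E2.
  assert (E3 : (5 * Z.of_nat n * Z.of_nat n = (2*z - Z.of_nat n) * (2*z - Z.of_nat n))%Z).
  { apply eq_IZR. rewrite !mult_IZR. rewrite <- E2. pose proof s5. simpl (IZR 5). nra. }
  eapply (no_sq5 n (Z.of_nat n)); [lia| lia | exact E3].
Qed.

Lemma floor_spec x : IZR (floorR x) <= x < IZR (floorR x) + 1.
Proof. unfold floorR. pose proof (base_Int_part x). lra. Qed.
Lemma floor_char x z : IZR z <= x -> x < IZR z + 1 -> floorR x = z.
Proof.
  intros H1 H2. unfold floorR, Int_part.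
  assert (up x = z + 1)%Z; [|lia].
  symmetry. apply tech_up; rewrite plus_IZR; simpl; lra.
Qed.
Lemma floor_ge x z : IZR z <= x -> (z <= floorR x)%Z.
Proof. intros. pose proof (floor_spec x). assert (IZR z < IZR (floorR x) + 1) by lra.
  rewrite <- (plus_IZR _ 1) in H1. apply lt_IZR in H1. lia. Qed.
Lemma floor_lt x z : x < IZR z -> (floorR x < z)%Z.
Proof. intros. pose proof (floor_spec x). assert (IZR (floorR x) < IZR z) by lra.
  apply lt_IZR in H1. lia. Qed.
Lemma floor_shift x k : floorR (x + IZR k) = (floorR x + k)%Z.
Proof. apply floor_char; rewrite plus_IZR; pose proof (floor_spec x); lra. Qed.

Definition an (n : nat) : nat := Z.to_nat (floorR (INR n * phi)).
Definition bn (n : nat) : nat := (an n + n)%nat.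

Lemma an_Z n : Z.of_nat (an n) = floorR (INR n * phi).
Proof. unfold an. rewrite Z2Nat.id; auto. apply floor_ge. pose proof (pos_INR n).
  pose proof phib. simpl. nra. Qed.
Lemma an_R n : INR (an n) = IZR (floorR (INR n * phi)).
Proof. rewrite INR_IZR_INZ, an_Z. reflexivity. Qed.

Lemma an_bnd n : INR (an n) <= INR n * phi < INR (an n) + 1.
Proof. rewrite an_R. apply floor_spec. Qed.
Lemma an_bnd' n : (1 <= n)%nat -> INR (an n) < INR n * phi.
Proof. intros. pose proof (an_bnd n). pose proof (irr n (Z.of_nat (an n)) H).
  rewrite <- INR_IZR_INZ in H1. lra. Qed.

Lemma xphi2 x : x * phi * phi = x * phi + x.
Proof. rewrite Rmult_assoc, phi2. ring. Qed.

Lemma an_ge n : (n <= an n)%nat.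
Proof. apply INR_le. pose proof (an_bnd n). pose proof phib. pose proof (pos_INR n).
  destruct (an_bnd n). assert (INR n < INR (an n) + 1) by nra.
  rewrite !INR_IZR_INZ in *. rewrite <- (plus_IZR _ 1) in H4. apply lt_IZR in H4.
  apply IZR_le. lia. Qed.
Lemma an_pos n : (1 <= n)%nat -> (1 <= an n)%nat.
Proof. pose proof (an_ge n). lia. Qed.

Lemma an_mono n k : (n < k)%nat -> (an n < an k)%nat.
Proof. intros. assert (H0 : (S n <= k)%nat) by lia. apply le_INR in H0. rewrite S_INR in H0.
  destruct (an_bnd n), (an_bnd k). pose proof phib.
  { assert (INR k * phi >= (INR n + 1) * phi) by nra.
    assert (G: INR (an n) < INR (an k)) by nra.
    apply INR_lt in G. lia. } Qed.
Lemma an_inj n k : an n = an k -> n = k.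
Proof. intros. destruct (Nat.lt_trichotomy n k) as [h|[h|h]]; auto;
  apply an_mono in h; lia. Qed.

Lemma AA n : (1 <= n)%nat -> (an (an n) + 1 = bn n)%nat.
Proof.
  intros Hn. unfold bn.
  assert (Z.of_nat (an (an n)) = Z.of_nat (an n) + Z.of_nat n - 1)%Z; [|lia].
  rewrite (an_Z (an n)). apply floor_char.
  - rewrite minus_IZR, plus_IZR, <- !INR_IZR_INZ.
    pose proof (an_bnd n). pose proof (an_bnd' n Hn). pose proof phib.
    set (x := INR n) in *. set (y := INR (an n)) in *.
    assert (y * phi = y + x - (x*phi - y)*(phi - 1)).
    { pose proof (xphi2 x). lra. }
    nra.
  - rewrite minus_IZR, plus_IZR, <- !INR_IZR_INZ.
    pose proof (an_bnd n). pose proof (an_bnd' n Hn). pose proof phib.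
    set (x := INR n) in *. set (y := INR (an n)) in *.
    assert (y * phi = y + x - (x*phi - y)*(phi - 1)).
    { pose proof (xphi2 x). lra. }
    nra.
Qed.

Lemma fB n : floorR ((phi - 1) * INR (bn n)) = Z.of_nat (an n).
Proof.
  apply floor_char; rewrite <- INR_IZR_INZ; unfold bn; rewrite plus_INR;
  pose proof (an_bnd n); pose proof phib;
  set (x := INR n) in *; set (y := INR (an n)) in *;
  (assert ((phi - 1) * (y + x) = y + (x*phi - y)*(2 - phi)) by (pose proof (xphi2 x); lra));
  nra.
Qed.

Lemma AB n : (an (bn n) = an n + bn n)%nat.
Proof.
  assert (Z.of_nat (an (bn n)) = Z.of_nat (an n) + Z.of_nat (bn n))%Z; [|lia].
  rewrite (an_Z (bn n)), <- fB, <- floor_shift, <- INR_IZR_INZ. f_equal. ring.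
Qed.

Lemma disj n k : (1 <= n)%nat -> (1 <= k)%nat -> an n <> bn k.
Proof.
  intros Hn Hk E. unfold bn in E.
  pose proof (an_bnd n). pose proof (an_bnd' n Hn).
  pose proof (an_bnd k). pose proof (an_bnd' k Hk).
  pose proof (irr n (Z.of_nat (an n) + 1) Hn). rewrite plus_IZR, <- INR_IZR_INZ in H3.
  assert (Hm : INR (an n) = INR (an k) + INR k) by (rewrite E, plus_INR; auto).
  pose proof phib.
  set (m := INR (an n)) in *. set (x := INR n) in *. set (y := INR k) in *. set (w := INR (an k)) in *.
  (* x*phi in (m, m+1) ; y*phi^2 = y*phi + y in (m, m+1) *)
  assert (x*phi < m + 1) by lra.
  assert (A1 : x > m * (phi - 1)).
  { assert ((x*phi - m) * (phi - 1) > 0) by nra. pose proof (xphi2 x). nra. }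
  assert (A2 : x < (m + 1) * (phi - 1)).
  { assert ((m + 1 - x*phi) * (phi - 1) > 0) by nra. pose proof (xphi2 x). nra. }
  assert (B1 : y > m * (2 - phi)).
  { assert ((y*phi + y - m) * (2 - phi) > 0) by nra. pose proof (xphi2 y). nra. }
  assert (B2 : y < (m + 1) * (2 - phi)).
  { assert ((m + 1 - y*phi - y) * (2 - phi) > 0) by nra. pose proof (xphi2 y). nra. }
  assert (m < x + y < m + 1) by lra.
  unfold m, x, y in H6. rewrite <- plus_INR in H6. destruct H6.
  apply INR_lt in H6. rewrite <- S_INR in H7. apply INR_lt in H7. lia.
Qed.

Lemma cover m : (1 <= m)%nat -> exists n, (1 <= n)%nat /\ (m = an n \/ m = bn n).
Proof.
  intros Hm.
  destruct (classic (exists n, (1 <= n)%nat /\ m = an n)) as [[n [H1 H2]]|HA].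
  { exists n; auto. }
  pose proof phib.
  set (n := Z.to_nat (floorR (INR m * (phi - 1)))).
  assert (Hn : INR n <= INR m * (phi - 1) < INR n + 1).
  { unfold n. rewrite INR_IZR_INZ, Z2Nat.id. apply floor_spec.
    apply floor_ge. pose proof (pos_INR m). simpl. nra. }
  assert (Hmpos : 1 <= INR m) by (apply (le_INR 1); auto).
  assert (E1 : INR n * phi < INR m).
  { assert (INR n * phi <= INR m).
    { assert (INR n * phi <= INR m * (phi - 1) * phi) by nra.
      pose proof (xphi2 (INR m)). nra. }
    destruct (Nat.eq_dec n 0) as [e|e].
    - rewrite e. simpl. lra.
    - pose proof (irr n (Z.of_nat m) ltac:(lia)) as G. rewrite <- INR_IZR_INZ in G. lra. }
  assert (E2 : INR m < (INR n + 1) * phi).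
  { assert (INR m * (phi - 1) * phi < (INR n + 1) * phi) by nra.
    pose proof (xphi2 (INR m)). nra. }
  assert (E3 : INR m + 1 < (INR n + 1) * phi).
  { assert (G : (m <= an (S n))%nat).
    { apply Nat2Z.inj_le. rewrite an_Z. apply floor_ge. rewrite <- INR_IZR_INZ, S_INR. lra. }
    assert (G2 : (m + 1 <= an (S n))%nat).
    { destruct (Nat.eq_dec m (an (S n))); [|lia]. exfalso. apply HA. exists (S n); split; auto; lia. }
    apply le_INR in G2. rewrite plus_INR in G2. simpl in G2.
    pose proof (an_bnd (S n)) as G3. rewrite S_INR in G3.
    pose proof (irr (S n) (Z.of_nat (m + 1)) ltac:(lia)) as G4.
    rewrite <- INR_IZR_INZ, plus_INR, S_INR in G4. simpl in G4. lra. }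
  assert (Hnm : (n < m)%nat).
  { apply INR_lt. nra. }
  exists (m - n)%nat. split; [lia|]. right. unfold bn.
  assert (an (m - n) = n); [|lia].
  apply Nat2Z.inj. rewrite an_Z. apply floor_char; rewrite <- INR_IZR_INZ;
  rewrite minus_INR by lia.
  - assert (INR n * phi * phi < INR m * phi) by nra. pose proof (xphi2 (INR n)). nra.
  - assert (INR m * phi + phi < (INR n + 1) * phi * phi) by nra. pose proof (xphi2 (INR n)).
    pose proof (xphi2 (INR n + 1)). nra.
Qed.

Lemma inR00 m : inR 0 0 m <-> exists n, (1 <= n)%nat /\ m = an n.
Proof. unfold inR; cbn [fib Nat.add]; split; intros [n [H1 H2]]; exists n; split; auto.
  - apply Nat2Z.inj. rewrite an_Z. lia.
  - rewrite H2, an_Z. lia. Qed.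
Lemma inR10 m : inR 1 0 m <-> exists n, (1 <= n)%nat /\ m = bn n.
Proof. unfold inR; cbn [fib Nat.add]; split; intros [n [H1 H2]]; exists n; split; auto.
  - apply Nat2Z.inj. unfold bn. rewrite Nat2Z.inj_add, an_Z. lia.
  - rewrite H2. unfold bn. rewrite Nat2Z.inj_add, an_Z. lia. Qed.
Lemma inR20 m : inR 2 0 m <-> exists n, (1 <= n)%nat /\ m = an (bn n).
Proof. unfold inR; cbn [fib Nat.add]; split; intros [n [H1 H2]]; exists n; split; auto.
  - apply Nat2Z.inj. rewrite AB. unfold bn. rewrite !Nat2Z.inj_add, an_Z. lia.
  - rewrite H2, AB. unfold bn. rewrite !Nat2Z.inj_add, an_Z. lia. Qed.

Lemma bn_pos n : (1 <= bn n)%nat -> True. Proof. auto. Qed.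

Lemma flA m : floorR (phi * INR m) = Z.of_nat (an m).
Proof. rewrite an_Z, Rmult_comm. reflexivity. Qed.

Lemma f_A n : (1 <= n)%nat -> f_map (an n) = bn n.
Proof. intros Hn. unfold f_map, ifP. destruct (excluded_middle_informative _) as [h|h].
  - rewrite flA, Nat2Z.id. pose proof (AA n Hn). lia.
  - exfalso. apply h, inR00. eauto. Qed.

Lemma f_B n : (1 <= n)%nat -> f_map (bn n) = an n.
Proof. intros Hn. unfold f_map, ifP. destruct (excluded_middle_informative _) as [h|h].
  - exfalso. apply inR00 in h. destruct h as [k [Hk E]]. symmetry in E. apply (disj k n); auto.
  - rewrite fB, Nat2Z.id. reflexivity. Qed.

Lemma tau_AB n : (1 <= n)%nat -> tau_map (an (bn n)) = bn (bn n).
Proof. intros Hn. unfold tau_map, ifP. destruct (excluded_middle_informative _) as [h|h].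
  - change 1 with (IZR 1). rewrite floor_shift, flA.
    pose proof (AA (bn n) ltac:(unfold bn; lia)). lia.
  - exfalso. apply h, inR20. eauto. Qed.

Lemma tau_B n : (1 <= n)%nat -> tau_map (bn n) = bn (an n).
Proof. intros Hn. unfold tau_map, ifP. destruct (excluded_middle_informative _) as [h|h].
  - exfalso. apply inR20 in h. destruct h as [k [Hk E]]. apply (disj (bn k) n); auto.
    unfold bn; lia.
  - destruct (excluded_middle_informative _) as [h2|h2].
    + replace (phi * INR (bn n) - 1) with (phi * INR (bn n) + IZR (-1)) by (simpl; ring).
      rewrite floor_shift, flA, AB. pose proof (AA n Hn). unfold bn in *. lia.
    + exfalso. apply h2, inR10. eauto. Qed.

Lemma tau_AA n : (1 <= n)%nat -> tau_map (an (an n)) = an n.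
Proof. intros Hn. pose proof (an_pos n Hn) as Hp. unfold tau_map, ifP.
  destruct (excluded_middle_informative _) as [h|h].
  - exfalso. apply inR20 in h. destruct h as [k [Hk E]]. apply an_inj in E.
    apply (disj n k); auto.
  - destruct (excluded_middle_informative _) as [h2|h2].
    + exfalso. apply inR10 in h2. destruct h2 as [k [Hk E]].
      apply (disj (an n) k); auto.
    + set (m := an (an n)).
      replace ((phi - 1) * INR m + 1) with (INR m * phi + IZR (1 - Z.of_nat m))
        by (rewrite minus_IZR, <- INR_IZR_INZ; simpl; ring).
      rewrite floor_shift, <- an_Z. unfold m. pose proof (AA (an n) Hp).
      pose proof (AA n Hn). unfold bn in *. lia. Qed.
Close Scope R_scope.

Lemma bn_inj n k : bn n = bn k -> n = k.
Proof. unfold bn. intros. destruct (Nat.lt_trichotomy n k) as [h|[h|h]]; auto;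
  pose proof (an_mono _ _ h); lia. Qed.

Lemma classify m : (1 <= m)%nat -> exists n, (1 <= n)%nat /\
  (m = an (an n) \/ m = an (bn n) \/ m = bn n).
Proof. intros Hm. destruct (cover m Hm) as [k [Hk [E|E]]].
  - destruct (cover k Hk) as [j [Hj [E2|E2]]]; exists j; subst; auto.
  - exists k; auto. Qed.

Theorem theorem4p8 :
  perm_N f_map /\ perm_N tau_map /\
  (forall tau_inv : nat -> nat,
     (forall n, (1 <= n)%nat ->
        (1 <= tau_inv n)%nat /\ tau_map (tau_inv n) = n /\ tau_inv (tau_map n) = n) ->
     forall n, (1 <= n)%nat -> f_map (tau_map n) = tau_inv (f_map n)).
Proof.
  split; [|split].
  - split; [|split].
    + intros m Hm. destruct (cover m Hm) as [n [Hn [E|E]]]; subst.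
      * rewrite f_A by auto. unfold bn; lia.
      * rewrite f_B by auto. apply an_pos; auto.
    + intros m k Hm Hk.
      destruct (cover m Hm) as [n [Hn [E|E]]]; destruct (cover k Hk) as [j [Hj [E2|E2]]]; subst;
        rewrite ?f_A, ?f_B by auto; intro Q.
      * apply bn_inj in Q; subst; auto.
      * exfalso; apply (disj j n); auto.
      * exfalso; apply (disj n j); auto.
      * apply an_inj in Q; subst; auto.
    + intros m Hm. destruct (cover m Hm) as [n [Hn [E|E]]]; subst.
      * exists (bn n). split; [unfold bn; lia| apply f_B; auto].
      * exists (an n). split; [apply an_pos; auto| apply f_A; auto].
  - split; [|split].
    + intros m Hm. destruct (classify m Hm) as [n [Hn [E|[E|E]]]]; subst;
        rewrite ?tau_AA, ?tau_AB, ?tau_B by auto; pose proof (an_pos n Hn); try (apply an_pos; auto); unfold bn; lia.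
    + intros m k Hm Hk.
      destruct (classify m Hm) as [n [Hn [E|[E|E]]]];
      destruct (classify k Hk) as [j [Hj [E2|[E2|E2]]]]; subst;
        rewrite ?tau_AA, ?tau_AB, ?tau_B by auto; intro Q.
      * apply an_inj in Q; subst; auto.
      * exfalso; apply (disj n (bn j)); auto; unfold bn; lia.
      * exfalso; apply (disj n (an j)); auto; apply an_pos; auto.
      * exfalso; apply (disj j (bn n)); auto; unfold bn; lia.
      * apply bn_inj, bn_inj in Q; subst; auto.
      * apply bn_inj in Q. exfalso; apply (disj j n); auto.
      * exfalso; apply (disj j (an n)); auto; apply an_pos; auto.
      * apply bn_inj in Q. exfalso; apply (disj n j); auto.
      * apply bn_inj, an_inj in Q; subst; auto.
    + intros m Hm. destruct (cover m Hm) as [n [Hn [E|E]]]; subst.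
      * exists (an (an n)). split; [apply an_pos, an_pos; auto| apply tau_AA; auto].
      * destruct (cover n Hn) as [j [Hj [E|E]]]; subst.
        -- exists (bn j). split; [unfold bn; lia| apply tau_B; auto].
        -- exists (an (bn j)). split; [apply an_pos; unfold bn; lia| apply tau_AB; auto].
  - intros ti Hti n Hn.
    destruct (classify n Hn) as [k [Hk [E|[E|E]]]]; subst.
    + pose proof (an_pos k Hk) as P.
      rewrite tau_AA, f_A, f_A by auto. rewrite <- tau_B by auto.
      symmetry. apply Hti. unfold bn; lia.
    + assert (P : (1 <= bn k)%nat) by (unfold bn; lia).
      rewrite tau_AB, f_B, f_A by auto. rewrite <- tau_AB by auto.
      symmetry. apply Hti. apply an_pos; auto.
    + pose proof (an_pos k Hk). rewrite tau_B, f_B, f_B by auto.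
      destruct (Hti (an (an k)) ltac:(apply an_pos, an_pos; auto)) as [_ [_ HH]].
      rewrite tau_AA in HH by auto. symmetry; exact HH.
Qed.
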